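(* Consider a network flow market on a directed series-parallel network with source $s$ and sink $t$, where each edge $e$ (a good) has capacity $c_e>0$ and delay cost $d_e\ge0$ per unit of flow. Each agent $i\in A$ must send $r_i\ge0$ units of flow from $s$ to $t$ (its covering constraints are flow conservation at all nodes other than $s,t$, net outflow $r_i$ at $s$, and nonnegativity), and the allocation must satisfy $\sum_if_{ie}\le c_e$ for every edge. Assume the maximum $s$–$t$ flow value is at least $\sum_{i\in A}r_i$. Then this market satisfies extensibility.
   Context: An allocation $(f_{ie})$ is supply respecting if $\sum_if_{ie}\le c_e$ for every edge $e$. The delay of agent $i$ is $\sum_ed_ef_{ie}$. For a set of agents $S$, an allocation is jointly optimal for $S$ if every $i\in S$ sends an $s$–$t$ flow of value $r_i$, it is supply respecting, and it minimizes $\sum_{i\in S}\sum_ed_ef_{ie}$ among such allocations. A market satisfies extensibility if for every $S\subset A$, every allocation jointly optimal for $S$ and every $i\in A\setminus S$, there is an allocation jointly optimal for $S\cup\{i\}$ in which each agent of $S$ has the same delay as before. A series-parallel network (between $s$ and $t$) is one obtained from single edges by repeated series and parallel composition. *)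

(* Defs.v *)
From HB Require Import structures.
From mathcomp Require Import all_boot all_order all_algebra.
Set Implicit Arguments. Unset Strict Implicit. Unset Printing Implicit Defensive.
Import Order.TTheory GRing.Theory Num.Theory.
Local Open Scope ring_scope.

Inductive sp : Type :=
| SPEdge : sp
| SPSer : sp -> sp -> sp    (* t of first glued to s of second *)
| SPPar : sp -> sp -> sp.   (* sources glued, sinks glued *)

Fixpoint sp_edge (N : sp) : finType :=
  match N with
  | SPEdge => unit
  | SPSer a b => (sp_edge a + sp_edge b)%type
  | SPPar a b => (sp_edge a + sp_edge b)%type
  end.

Fixpoint sp_inner (N : sp) : finType :=
  match N with
  | SPEdge => void
  | SPSer a b => (sp_inner a + sp_inner b + unit)%type  (* unit = glue node *)
  | SPPar a b => (sp_inner a + sp_inner b)%type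
  end.

(* Nodes: inl false = source s, inl true = sink t, inr x = internal node x. *)
Definition sp_node (N : sp) : finType := (bool + sp_inner N)%type.
Definition sp_s (N : sp) : sp_node N := inl false.
Definition sp_t (N : sp) : sp_node N := inl true.

Definition ser_l (a b : sp) (x : sp_node a) : sp_node (SPSer a b) :=
  match x with
  | inl false => inl false
  | inl true => inr (inr tt)
  | inr y => inr (inl (inl y))
  end.
Definition ser_r (a b : sp) (x : sp_node b) : sp_node (SPSer a b) :=
  match x with
  | inl false => inr (inr tt)
  | inl true => inl true
  | inr y => inr (inl (inr y))
  end.
Definition par_l (a b : sp) (x : sp_node a) : sp_node (SPPar a b) :=
  match x with
  | inl z => inl z
  | inr y => inr (inl y)
  end.
Definition par_r (a b : sp) (x : sp_node b) : sp_node (SPPar a b) :=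
  match x with
  | inl z => inl z
  | inr y => inr (inr y)
  end.

Fixpoint sp_ends_rec (N : sp) : sp_edge N -> sp_node N * sp_node N :=
  match N return sp_edge N -> sp_node N * sp_node N with
  | SPEdge => fun _ => (inl false, inl true)
  | SPSer a b => fun e =>
      match e with
      | inl ea => (@ser_l a b (sp_ends_rec ea).1, @ser_l a b (sp_ends_rec ea).2)
      | inr eb => (@ser_r a b (sp_ends_rec eb).1, @ser_r a b (sp_ends_rec eb).2)
      end
  | SPPar a b => fun e =>
      match e with
      | inl ea => (@par_l a b (sp_ends_rec ea).1, @par_l a b (sp_ends_rec ea).2)
      | inr eb => (@par_r a b (sp_ends_rec eb).1, @par_r a b (sp_ends_rec eb).2)
      end
  end.

Definition sp_ends (N : sp) (e : sp_edge N) := sp_ends_rec e.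

Definition sp_tail (N : sp) (e : sp_edge N) : sp_node N := (sp_ends e).1.
Definition sp_head (N : sp) (e : sp_edge N) : sp_node N := (sp_ends e).2.

Section Market.
Variables (R : realFieldType) (N : sp) (A : finType).

Definition net_out (g : sp_edge N -> R) (v : sp_node N) : R :=
  \sum_(e | sp_tail e == v) g e - \sum_(e | sp_head e == v) g e.

Definition is_st_flow (g : sp_edge N -> R) (val : R) : Prop :=
  (forall e, 0 <= g e) /\
  (forall v : sp_node N, v != sp_s N -> v != sp_t N -> net_out g v = 0) /\
  net_out g (sp_s N) = val.

Definition delay (d : sp_edge N -> R) (g : sp_edge N -> R) : R :=
  \sum_e d e * g e.

Definition supply_respecting (c : sp_edge N -> R) (S : {set A})
  (f : A -> sp_edge N -> R) : Prop :=
  forall e, \sum_(i in S) f i e <= c e.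

Definition feasible_for (c : sp_edge N -> R) (r : A -> R) (S : {set A})
  (f : A -> sp_edge N -> R) : Prop :=
  (forall i, i \in S -> is_st_flow (f i) (r i)) /\ supply_respecting c S f.

Definition jointly_optimal (c d : sp_edge N -> R) (r : A -> R) (S : {set A})
  (f : A -> sp_edge N -> R) : Prop :=
  feasible_for c r S f /\
  forall g, feasible_for c r S g ->
    \sum_(i in S) delay d (f i) <= \sum_(i in S) delay d (g i).

Definition extensibility (c d : sp_edge N -> R) (r : A -> R) : Prop :=
  forall (S : {set A}) (f : A -> sp_edge N -> R) (i : A),
    jointly_optimal c d r S f -> i \notin S ->
    exists g : A -> sp_edge N -> R,
      jointly_optimal c d r (i |: S) g /\
      forall j, j \in S -> delay d (g j) = delay d (f j).

End Market.

(* Main.v *)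
Require Import Defs.
From HB Require Import structures.
From mathcomp Require Import all_boot all_order all_algebra.
From mathcomp Require Import ring lra.
From Stdlib Require Import FunctionalExtensionality.
Import Order.TTheory GRing.Theory Num.Theory.
Set Implicit Arguments. Unset Strict Implicit. Unset Printing Implicit Defensive.
Local Open Scope ring_scope.


Section Flows.
Variable R : realFieldType.

Definition lft (a b : sp) (g : sp_edge a + sp_edge b -> R) : sp_edge a -> R :=
  fun e => g (inl e).
Definition rgt (a b : sp) (g : sp_edge a + sp_edge b -> R) : sp_edge b -> R :=
  fun e => g (inr e).
Definition sjoin (a b : sp) (f : sp_edge a -> R) (g : sp_edge b -> R)
  : sp_edge a + sp_edge b -> R :=
  fun e => match e with inl x => f x | inr y => g y end.

Lemma sum_map (E I T : finType) (phi : I -> T) (tau : E -> I) (g : E -> R) (x : T) :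
  \sum_(e | phi (tau e) == x) g e = \sum_(y | phi y == x) \sum_(e | tau e == y) g e.
Proof.
rewrite (partition_big tau (fun y => phi y == x)) //.
apply: eq_bigr => y /eqP hy; apply: eq_bigl => e.
by case: (tau e =P y) => [->|]; rewrite ?andbF ?andbT ?hy ?eqxx.
Qed.

Lemma sum_inj (I T : finType) (phi : I -> T) (h : I -> R) y0 :
  injective phi -> \sum_(y | phi y == phi y0) h y = h y0.
Proof. move=> inj; rewrite (big_pred1 y0) // => y; exact: inj_eq. Qed.

Lemma sum_none (I T : finType) (phi : I -> T) (h : I -> R) x :
  (forall y, phi y != x) -> \sum_(y | phi y == x) h y = 0.
Proof. move=> H; rewrite big_pred0 // => y; exact/negbTE. Qed.

Lemma ser_l_inj a b : injective (@ser_l a b).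
Proof. by move=> [[]|x] [[]|y] //= [->]. Qed.
Lemma ser_r_inj a b : injective (@ser_r a b).
Proof. by move=> [[]|x] [[]|y] //= [->]. Qed.
Lemma par_l_inj a b : injective (@par_l a b).
Proof. by move=> [[]|x] [[]|y] //= [->]. Qed.
Lemma par_r_inj a b : injective (@par_r a b).
Proof. by move=> [[]|x] [[]|y] //= [->]. Qed.

Lemma netout_ser a b (g : sp_edge (SPSer a b) -> R) x :
  net_out g x = \sum_(y | @ser_l a b y == x) net_out (lft g) y
              + \sum_(y | @ser_r a b y == x) net_out (rgt g) y.
Proof.
rewrite {1}/net_out [in LHS]big_sumType [in LHS]big_sumType /=.
rewrite /net_out /sp_tail /sp_head /sp_ends /=.
rewrite !(sum_map (@ser_l a b) (fun e => (sp_ends_rec e).1))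
        !(sum_map (@ser_l a b) (fun e => (sp_ends_rec e).2))
        !(sum_map (@ser_r a b) (fun e => (sp_ends_rec e).1))
        !(sum_map (@ser_r a b) (fun e => (sp_ends_rec e).2)).
rewrite !sumrB /lft /rgt; lra.
Qed.

Lemma netout_par a b (g : sp_edge (SPPar a b) -> R) x :
  net_out g x = \sum_(y | @par_l a b y == x) net_out (lft g) y
              + \sum_(y | @par_r a b y == x) net_out (rgt g) y.
Proof.
rewrite {1}/net_out [in LHS]big_sumType [in LHS]big_sumType /=.
rewrite /net_out /sp_tail /sp_head /sp_ends /=.
rewrite !(sum_map (@par_l a b) (fun e => (sp_ends_rec e).1))
        !(sum_map (@par_l a b) (fun e => (sp_ends_rec e).2))
        !(sum_map (@par_r a b) (fun e => (sp_ends_rec e).1))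
        !(sum_map (@par_r a b) (fun e => (sp_ends_rec e).2)).
rewrite !sumrB /lft /rgt; lra.
Qed.


Lemma sum_inj' (I T : finType) (phi : I -> T) (h : I -> R) y0 x :
  injective phi -> phi y0 = x -> \sum_(y | phi y == x) h y = h y0.
Proof. by move=> inj <-; exact: sum_inj. Qed.

Section Ser.
Variables (a b : sp) (g : sp_edge (SPSer a b) -> R).
Lemma nos_s : net_out g (inl false) = net_out (lft g) (inl false).
Proof.
rewrite netout_ser (sum_inj' (y0 := inl false) _ (@ser_l_inj a b)) //.
by rewrite sum_none ?addr0 // => -[[]|?].
Qed.
Lemma nos_t : net_out g (inl true) = net_out (rgt g) (inl true).
Proof.
rewrite netout_ser (sum_inj' (y0 := inl true) _ (@ser_r_inj a b)) //.
by rewrite sum_none ?add0r // => -[[]|?].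
Qed.
Lemma nos_a y : net_out g (inr (inl (inl y))) = net_out (lft g) (inr y).
Proof.
rewrite netout_ser (sum_inj' (y0 := inr y) _ (@ser_l_inj a b)) //.
by rewrite sum_none ?addr0 // => -[[]|?].
Qed.
Lemma nos_b y : net_out g (inr (inl (inr y))) = net_out (rgt g) (inr y).
Proof.
rewrite netout_ser (sum_inj' (y0 := inr y) _ (@ser_r_inj a b)) //.
by rewrite sum_none ?add0r // => -[[]|?].
Qed.
Lemma nos_glue : net_out g (inr (inr tt)) =
   net_out (lft g) (inl true) + net_out (rgt g) (inl false).
Proof.
rewrite netout_ser (sum_inj' (y0 := inl true) _ (@ser_l_inj a b)) //.
by rewrite (sum_inj' (y0 := inl false) _ (@ser_r_inj a b)).
Qed.
End Ser.

Section Par.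
Variables (a b : sp) (g : sp_edge (SPPar a b) -> R).
Lemma nop_st z : net_out g (inl z) = net_out (lft g) (inl z) + net_out (rgt g) (inl z).
Proof.
rewrite netout_par (sum_inj' (y0 := inl z) _ (@par_l_inj a b)) //.
by rewrite (sum_inj' (y0 := inl z) _ (@par_r_inj a b)).
Qed.
Lemma nop_a y : net_out g (inr (inl y)) = net_out (lft g) (inr y).
Proof.
rewrite netout_par (sum_inj' (y0 := inr y) _ (@par_l_inj a b)) //.
by rewrite sum_none ?addr0 // => -[[]|?].
Qed.
Lemma nop_b y : net_out g (inr (inr y)) = net_out (rgt g) (inr y).
Proof.
rewrite netout_par (sum_inj' (y0 := inr y) _ (@par_r_inj a b)) //.
by rewrite sum_none ?add0r // => -[[]|?].
Qed.
End Par.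

Lemma netout_total N (g : sp_edge N -> R) : \sum_x net_out g x = 0.
Proof.
have H (f : sp_edge N -> sp_node N) : \sum_x \sum_(e | f e == x) g e = \sum_e g e.
  by rewrite [RHS](partition_big f predT).
by rewrite /net_out sumrB !H subrr.
Qed.

Lemma netout_t N (g : sp_edge N -> R) v : is_st_flow g v -> net_out g (sp_t N) = - v.
Proof.
move=> [_ [hc hv]]; have := netout_total g.
rewrite big_sumType big_bool /= big1 ?addr0.
  by move: hv; rewrite /sp_s /sp_t => -> /eqP; rewrite addr_eq0 => /eqP.
by move=> y _; apply: hc.
Qed.

Lemma edge_flow (g : sp_edge SPEdge -> R) v :
  is_st_flow g v <-> 0 <= g tt /\ g tt = v.
Proof.
have Hs : net_out g (inl false) = g tt.
  rewrite /net_out (big_pred1 tt) ?big_pred0 ?subr0 //; by case.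
have Hi : forall y : sp_inner SPEdge, net_out g (inr y) = 0 by case.
split=> [[h0 [_ hv]]|[h0 hv]]; first by split; [exact: h0 | rewrite -Hs].
split; first by case.
split; last by rewrite Hs.
by move=> [[]|y] //= _ _; rewrite Hi.
Qed.

Lemma ser_flow a b (g : sp_edge (SPSer a b) -> R) v :
  is_st_flow g v <-> is_st_flow (lft g) v /\ is_st_flow (rgt g) v.
Proof.
split.
  move=> [h0 [hc hv]].
  have Ha : is_st_flow (lft g) v.
    split; first by move=> e; exact: h0.
    split; last by rewrite -nos_s.
    by move=> [[]|y] // _ _; rewrite -nos_a; apply: hc.
  split=> //; split; first by move=> e; exact: h0.
  split.
    by move=> [[]|y] // _ _; rewrite -nos_b; apply: hc.
  have := hc (inr (inr tt)) isT isT.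
  rewrite nos_glue (netout_t Ha) => /eqP; rewrite addrC subr_eq0 => /eqP //.
move=> [Ha Hb]; split; first by move=> [e|e]; [case: Ha => + _; apply | case: Hb => + _; apply].
split; last by rewrite nos_s; case: Ha => _ [].
move=> [[]|[[y|y]|[]]] // _ _.
- by rewrite nos_a; case: Ha => _ [+ _]; apply.
- by rewrite nos_b; case: Hb => _ [+ _]; apply.
rewrite nos_glue (netout_t Ha); case: Hb => _ [_ ->]; exact: addNr.
Qed.

Lemma par_flow a b (g : sp_edge (SPPar a b) -> R) v :
  is_st_flow g v <-> exists v1 v2, is_st_flow (lft g) v1 /\ is_st_flow (rgt g) v2 /\ v = v1 + v2.
Proof.
split.
  move=> [h0 [hc hv]].
  exists (net_out (lft g) (inl false)), (net_out (rgt g) (inl false)).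
  split; [|split]; last by rewrite -nop_st.
  - split; first by move=> e; exact: h0.
    split=> //; by move=> [[]|y] // _ _; rewrite -nop_a; apply: hc.
  - split; first by move=> e; exact: h0.
    split=> //; by move=> [[]|y] // _ _; rewrite -nop_b; apply: hc.
move=> [v1 [v2 [Ha [Hb ->]]]].
split; first by move=> [e|e]; [case: Ha => + _; apply | case: Hb => + _; apply].
split; last by rewrite nop_st; case: Ha => _ [_ ->]; case: Hb => _ [_ ->].
move=> [[]|[y|y]] // _ _.
- by rewrite nop_a; case: Ha => _ [+ _]; apply.
- by rewrite nop_b; case: Hb => _ [+ _]; apply.
Qed.


Lemma netout_comb N (g h : sp_edge N -> R) t x :
  net_out (fun e => g e + t * h e) x = net_out g x + t * net_out h x.
Proof. rewrite /net_out !big_split /= -!mulr_sumr; ring. Qed.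

Lemma flow_comb N (g h : sp_edge N -> R) v w t :
  is_st_flow g v -> is_st_flow h w -> (forall e, 0 <= g e + t * h e) ->
  is_st_flow (fun e => g e + t * h e) (v + t * w).
Proof.
move=> [_ [gc gv]] [_ [hc hv]] h0; split=> //; split.
  by move=> x xs xt; rewrite netout_comb gc // hc // mulr0 addr0.
by rewrite netout_comb gv hv.
Qed.

Lemma flow0 N : is_st_flow (fun _ : sp_edge N => 0 : R) 0.
Proof.
have H x : net_out (fun _ : sp_edge N => 0 : R) x = 0.
  by rewrite /net_out !big1 ?subr0.
by split=> //; split.
Qed.

Lemma delay_comb N (d g h : sp_edge N -> R) t :
  delay d (fun e => g e + t * h e) = delay d g + t * delay d h.
Proof.
rewrite /delay mulr_sumr -big_split /=; apply: eq_bigr => e _; ring.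
Qed.

Lemma delay_ser a b (d g : sp_edge (SPSer a b) -> R) :
  delay d g = delay (lft d) (lft g) + delay (rgt d) (rgt g).
Proof. by rewrite /delay big_sumType. Qed.
Lemma delay_par a b (d g : sp_edge (SPPar a b) -> R) :
  delay d g = delay (lft d) (lft g) + delay (rgt d) (rgt g).
Proof. by rewrite /delay big_sumType. Qed.

Lemma flow_ge0 N (g : sp_edge N -> R) v : is_st_flow g v -> 0 <= v.
Proof.
elim: N g v => [|a IHa b IHb|a IHa b IHb] g v.
- by move/edge_flow => [h <-].
- by move/ser_flow => [/IHa].
- move/par_flow => [v1 [v2 [/IHa h1 [/IHb h2 ->]]]]; exact: addr_ge0.
Qed.

Lemma netout_sum N (A : finType) (S : {set A}) (f : A -> sp_edge N -> R) x :
  net_out (fun e => \sum_(j in S) f j e) x = \sum_(j in S) net_out (f j) x.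
Proof.
rewrite /net_out sumrB; congr (_ - _).
  rewrite [RHS](exchange_big_dep (fun e => sp_tail e == x)) //=.
  by apply: eq_bigr => e /eqP ->; apply: eq_bigl => j; rewrite eqxx andbT.
rewrite [RHS](exchange_big_dep (fun e => sp_head e == x)) //=.
by apply: eq_bigr => e /eqP ->; apply: eq_bigl => j; rewrite eqxx andbT.
Qed.

Lemma delay_sum N (A : finType) (S : {set A}) (d : sp_edge N -> R) (f : A -> sp_edge N -> R) :
  delay d (fun e => \sum_(j in S) f j e) = \sum_(j in S) delay d (f j).
Proof.
rewrite /delay exchange_big /=; apply: eq_bigr => e _; by rewrite mulr_sumr.
Qed.


Lemma sum_edge (h : sp_edge SPEdge -> R) : \sum_e h e = h tt.
Proof. by rewrite (big_pred1 tt) // => -[]. Qed.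

Definition osum (x y : option R) :=
  match x, y with Some a, Some b => Some (a + b) | _, _ => None end.
Definition omin (x y : option R) :=
  match x, y with
  | Some a, Some b => Some (Num.min a b) | Some a, None => Some a | None, y => y end.
Definition omax (x y : option R) :=
  match x, y with
  | Some a, Some b => Some (Num.max a b) | Some a, None => Some a | None, y => y end.
Definition leo (x y : option R) : Prop :=
  match x, y with Some a, Some b => a <= b | _, _ => True end.
Definition lbo (m : R) (o : option R) : Prop :=
  match o with Some a => m <= a | None => True end.
Definition ubo (m : R) (o : option R) : Prop :=
  match o with Some a => a <= m | None => True end.
Definition opick (x y : option R) : bool :=
  match x, y with Some a, Some b => a <= b | Some _, None => true | None, _ => false end.

Fixpoint fw (N : sp) : (sp_edge N -> R) -> (sp_edge N -> R) -> (sp_edge N -> R) -> option R :=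
  match N return (sp_edge N -> R) -> (sp_edge N -> R) -> (sp_edge N -> R) -> option R with
  | SPEdge => fun c d F => if F tt < c tt then Some (d tt) else None
  | SPSer a b => fun c d F =>
      osum (fw (lft c) (lft d) (lft F)) (fw (rgt c) (rgt d) (rgt F))
  | SPPar a b => fun c d F =>
      omin (fw (lft c) (lft d) (lft F)) (fw (rgt c) (rgt d) (rgt F))
  end.

Fixpoint bw (N : sp) : (sp_edge N -> R) -> (sp_edge N -> R) -> option R :=
  match N return (sp_edge N -> R) -> (sp_edge N -> R) -> option R with
  | SPEdge => fun d F => if 0 < F tt then Some (d tt) else None
  | SPSer a b => fun d F => osum (bw (lft d) (lft F)) (bw (rgt d) (rgt F))
  | SPPar a b => fun d F => omax (bw (lft d) (lft F)) (bw (rgt d) (rgt F))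
  end.

Fixpoint spopt (N : sp) : (sp_edge N -> R) -> (sp_edge N -> R) -> (sp_edge N -> R) -> Prop :=
  match N return (sp_edge N -> R) -> (sp_edge N -> R) -> (sp_edge N -> R) -> Prop with
  | SPEdge => fun c d F => True
  | SPSer a b => fun c d F =>
      spopt (lft c) (lft d) (lft F) /\ spopt (rgt c) (rgt d) (rgt F)
  | SPPar a b => fun c d F =>
      [/\ spopt (lft c) (lft d) (lft F), spopt (rgt c) (rgt d) (rgt F),
          leo (bw (rgt d) (rgt F)) (fw (lft c) (lft d) (lft F)) &
          leo (bw (lft d) (lft F)) (fw (rgt c) (rgt d) (rgt F))]
  end.

Fixpoint cpath (N : sp) : (sp_edge N -> R) -> (sp_edge N -> R) -> (sp_edge N -> R) -> sp_edge N -> R :=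
  match N return (sp_edge N -> R) -> (sp_edge N -> R) -> (sp_edge N -> R) -> sp_edge N -> R with
  | SPEdge => fun c d F _ => 1
  | SPSer a b => fun c d F =>
      sjoin (cpath (lft c) (lft d) (lft F)) (cpath (rgt c) (rgt d) (rgt F))
  | SPPar a b => fun c d F =>
      if opick (fw (lft c) (lft d) (lft F)) (fw (rgt c) (rgt d) (rgt F))
      then sjoin (cpath (lft c) (lft d) (lft F)) (fun _ => 0)
      else sjoin (fun _ => 0) (cpath (rgt c) (rgt d) (rgt F))
  end.

End Flows.

Section Opt.
Variable R : realFieldType.

Lemma delay0 N (d : sp_edge N -> R) : delay d (fun _ => 0) = 0.
Proof. by rewrite /delay big1 // => e _; rewrite mulr0. Qed.

Lemma fw_spec N : forall (c d F : sp_edge N -> R) m, (forall e, F e <= c e) ->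
  fw c d F = Some m ->
  is_st_flow (cpath c d F) 1 /\ delay d (cpath c d F) = m /\
  forall e, cpath c d F e = 0 \/ (cpath c d F e = 1 /\ F e < c e).
Proof.
elim: N => [|a IHa b IHb|a IHa b IHb] c d F m Fc /=.
- case: ifP => // lt [<-]; split; first by apply/edge_flow; rewrite ler01.
  split; first by rewrite /delay sum_edge mulr1.
  by move=> []; right.
- case Ea: (fw _ _ _) => [x|] //; case Eb: (fw _ _ _) => [y|] // [<-].
  have [pa [ca sa]] := IHa _ _ _ _ (fun e => Fc (inl e)) Ea.
  have [pb [cb sb]] := IHb _ _ _ _ (fun e => Fc (inr e)) Eb.
  split; first by apply/ser_flow.
  split; first by rewrite delay_ser ca cb.
  by move=> [e|e]; [exact: sa | exact: sb].
- case Ea: (fw _ _ _) => [x|]; case Eb: (fw _ _ _) => [y|] //= Em.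
  + case: ifP => xy.
    * have [pa [ca sa]] := IHa _ _ _ _ (fun e => Fc (inl e)) Ea.
      split; first by apply/par_flow; exists 1, 0; split=> //; split; [exact: flow0| rewrite addr0].
      split; first by rewrite delay_par ca delay0 addr0; move: Em; rewrite (min_l (idP xy)) => -[].
      by move=> [e|e]; [exact: sa | left].
    * have [pb [cb sb]] := IHb _ _ _ _ (fun e => Fc (inr e)) Eb.
      split; first by apply/par_flow; exists 0, 1; split; [exact: flow0|split=> //; rewrite add0r].
      split; last by move=> [e|e]; [left | exact: sb].
      rewrite delay_par cb delay0 add0r; move: Em.
      by move/negbT: xy; rewrite -ltNge => /ltW h; rewrite (min_r h) => -[].
  + have [pa [ca sa]] := IHa _ _ _ _ (fun e => Fc (inl e)) Ea.
    split; first by apply/par_flow; exists 1, 0; split=> //; split; [exact: flow0| rewrite addr0].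
    split; first by rewrite delay_par ca delay0 addr0; case: Em.
    by move=> [e|e]; [exact: sa | left].
  + have [pb [cb sb]] := IHb _ _ _ _ (fun e => Fc (inr e)) Eb.
    split; first by apply/par_flow; exists 0, 1; split; [exact: flow0|split=> //; rewrite add0r].
    split; last by move=> [e|e]; [left | exact: sb].
    by rewrite delay_par cb delay0 add0r; case: Em.
Qed.


Lemma bw_spec N : forall (d F : sp_edge N -> R) m, bw d F = Some m ->
  exists p, is_st_flow p 1 /\ delay d p = m /\
  forall e, p e = 0 \/ (p e = 1 /\ 0 < F e).
Proof.
elim: N => [|a IHa b IHb|a IHa b IHb] d F m /=.
- case: ifP => // lt [<-]; exists (fun _ => 1); split; first by apply/edge_flow; rewrite ler01.
  split; first by rewrite /delay sum_edge mulr1.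
  by move=> []; right.
- case Ea: (bw _ _) => [x|] //; case Eb: (bw _ _) => [y|] // [<-].
  have [pa [fa [ca sa]]] := IHa _ _ _ Ea.
  have [pb [fb [cb sb]]] := IHb _ _ _ Eb.
  exists (sjoin pa pb); split; first by apply/ser_flow.
  split; first by rewrite delay_ser ca cb.
  by move=> [e|e]; [exact: sa | exact: sb].
- have L1 x : bw (lft d) (lft F) = Some x -> exists p : sp_edge (SPPar a b) -> R,
      is_st_flow p 1 /\ delay d p = x /\ forall e, p e = 0 \/ (p e = 1 /\ 0 < F e).
    move=> Ea; have [pa [fa [ca sa]]] := IHa _ _ _ Ea.
    exists (sjoin pa (fun _ => 0)).
    split; first by apply/par_flow; exists 1, 0; split=> //; split; [exact: flow0| rewrite addr0].
    split; first by rewrite delay_par ca delay0 addr0.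
    by move=> [e|e]; [exact: sa | left].
  have L2 y : bw (rgt d) (rgt F) = Some y -> exists p : sp_edge (SPPar a b) -> R,
      is_st_flow p 1 /\ delay d p = y /\ forall e, p e = 0 \/ (p e = 1 /\ 0 < F e).
    move=> Eb; have [pb [fb [cb sb]]] := IHb _ _ _ Eb.
    exists (sjoin (fun _ => 0) pb).
    split; first by apply/par_flow; exists 0, 1; split; [exact: flow0|split=> //; rewrite add0r].
    split; first by rewrite delay_par cb delay0 add0r.
    by move=> [e|e]; [left | exact: sb].
  case Ea: (bw _ _) => [x|]; case Eb: (bw _ _) => [y|] //= Em.
  + case: (leP y x) => h.
    * by apply: L1; rewrite Ea; move: Em; rewrite (max_l h).
    * by apply: L2; rewrite Eb; move: Em; rewrite (max_r (ltW h)).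
  + by apply: L1; rewrite Ea.
  + by apply: L2; rewrite Eb.
Qed.

Lemma lbo_omin (m : R) x y : lbo m (omin x y) -> lbo m x /\ lbo m y.
Proof. by case: x => [x|]; case: y => [y|] //=; rewrite le_min => /andP. Qed.
Lemma ubo_omax (m : R) x y : ubo m (omax x y) -> ubo m x /\ ubo m y.
Proof. by case: x => [x|]; case: y => [y|] //=; rewrite ge_max => /andP. Qed.
Lemma omin_None (x y : option R) : omin x y = None -> x = None /\ y = None.
Proof. by case: x => [x|]; case: y => [y|]. Qed.
Lemma omax_None (x y : option R) : omax x y = None -> x = None /\ y = None.
Proof. by case: x => [x|]; case: y => [y|]. Qed.
Lemma lbo_ex (o : option R) : exists m, lbo m o.
Proof. by case: o => [x|]; [exists x; exact: lexx | exists 0]. Qed.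
Lemma ubo_ex (o : option R) : exists m, ubo m o.
Proof. by case: o => [x|]; [exists x; exact: lexx | exists 0]. Qed.
Lemma up_eq (o : option R) (X Y u v : R) :
  (forall m, lbo m o -> X + m * (u - v) <= Y) -> u = v -> X <= Y.
Proof. move=> H e; have [m hm] := lbo_ex o; have h := H m hm; by rewrite e subrr mulr0 addr0 in h. Qed.
Lemma down_eq (o : option R) (X Y u v : R) :
  (forall m, ubo m o -> X - m * (v - u) <= Y) -> u = v -> X <= Y.
Proof. move=> H e; have [m hm] := ubo_ex o; have h := H m hm; by rewrite e subrr mulr0 subr0 in h. Qed.

Definition UpP N (c d F : sp_edge N -> R) v :=
  forall G u, is_st_flow G u -> (forall e, G e <= c e) -> v <= u ->
   (fw c d F = None -> u = v) /\
   forall m, lbo m (fw c d F) -> delay d F + m * (u - v) <= delay d G.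
Definition DownP N (c d F : sp_edge N -> R) v :=
  forall G u, is_st_flow G u -> (forall e, G e <= c e) -> u <= v ->
   (bw d F = None -> u = v) /\
   forall m, ubo m (bw d F) -> delay d F - m * (v - u) <= delay d G.


Lemma fw_ser a b (c d F : sp_edge (SPSer a b) -> R) :
  fw c d F = osum (fw (lft c) (lft d) (lft F)) (fw (rgt c) (rgt d) (rgt F)).
Proof. by []. Qed.
Lemma fw_par a b (c d F : sp_edge (SPPar a b) -> R) :
  fw c d F = omin (fw (lft c) (lft d) (lft F)) (fw (rgt c) (rgt d) (rgt F)).
Proof. by []. Qed.
Lemma bw_ser a b (d F : sp_edge (SPSer a b) -> R) :
  bw d F = osum (bw (lft d) (lft F)) (bw (rgt d) (rgt F)).
Proof. by []. Qed.
Lemma bw_par a b (d F : sp_edge (SPPar a b) -> R) :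
  bw d F = omax (bw (lft d) (lft F)) (bw (rgt d) (rgt F)).
Proof. by []. Qed.
Lemma fw_edge (c d F : sp_edge SPEdge -> R) :
  fw c d F = if F tt < c tt then Some (d tt) else None.
Proof. by []. Qed.
Lemma bw_edge (d F : sp_edge SPEdge -> R) :
  bw d F = if 0 < F tt then Some (d tt) else None.
Proof. by []. Qed.

Lemma opt N : forall (c d F : sp_edge N -> R) v, is_st_flow F v ->
  (forall e, F e <= c e) -> spopt c d F -> UpP c d F v /\ DownP c d F v.
Proof.
elim: N => [|a IHa b IHb|a IHa b IHb] c d F v.
- move=> /edge_flow [F0 <-] Fc _; split=> G u /edge_flow [G0 <-] Gc vu;
    rewrite /delay !sum_edge.
  + rewrite fw_edge; case: ifP => h.
      split=> // m /= hm.
      have : 0 <= (d tt - m) * (G tt - F tt) by apply: mulr_ge0; rewrite subr_ge0.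
      lra.
    move/negbT: h; rewrite -leNgt => h.
    have e : G tt = F tt by have := Gc tt; lra.
    by split=> // m _; rewrite e subrr mulr0 addr0.
  + rewrite bw_edge; case: ifP => h.
      split=> // m /= hm.
      have : 0 <= (m - d tt) * (F tt - G tt) by apply: mulr_ge0; rewrite subr_ge0.
      lra.
    move/negbT: h; rewrite -leNgt => h.
    have e : G tt = F tt by lra.
    by split=> // m _; rewrite e subrr mulr0 subr0.
- move=> /ser_flow [Fa Fb] Fc [Sa Sb].
  have [UA DA] := IHa _ _ _ _ Fa (fun e => Fc (inl e)) Sa.
  have [UB DB] := IHb _ _ _ _ Fb (fun e => Fc (inr e)) Sb.
  split=> G u /ser_flow [Ga Gb] Gc vu; rewrite !delay_ser.
  + have [NA HA] := UA _ _ Ga (fun e => Gc (inl e)) vu.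
    have [NB HB] := UB _ _ Gb (fun e => Gc (inr e)) vu.
    rewrite fw_ser.
    case Ea: (fw (lft c) (lft d) (lft F)) NA HA => [x|] NA HA;
    case Eb: (fw (rgt c) (rgt d) (rgt F)) NB HB => [y|] NB HB /=.
    * split=> // m hm; have := HA x (lexx x); have := HB y (lexx y).
      have : 0 <= (x + y - m) * (u - v) by apply: mulr_ge0; rewrite subr_ge0.
      lra.
    * have e := NB erefl; split=> // m _; rewrite e subrr mulr0 addr0.
      have := up_eq HA e; have := up_eq HB e; lra.
    * have e := NA erefl; split=> // m _; rewrite e subrr mulr0 addr0.
      have := up_eq HA e; have := up_eq HB e; lra.
    * have e := NA erefl; split=> // m _; rewrite e subrr mulr0 addr0.
      have := up_eq HA e; have := up_eq HB e; lra.
  + have [NA HA] := DA _ _ Ga (fun e => Gc (inl e)) vu.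
    have [NB HB] := DB _ _ Gb (fun e => Gc (inr e)) vu.
    rewrite bw_ser.
    case Ea: (bw (lft d) (lft F)) NA HA => [x|] NA HA;
    case Eb: (bw (rgt d) (rgt F)) NB HB => [y|] NB HB /=.
    * split=> // m hm; have := HA x (lexx x); have := HB y (lexx y).
      have : 0 <= (m - (x + y)) * (v - u) by apply: mulr_ge0; rewrite subr_ge0.
      lra.
    * have e := NB erefl; split=> // m _; rewrite e subrr mulr0 subr0.
      have := down_eq HA e; have := down_eq HB e; lra.
    * have e := NA erefl; split=> // m _; rewrite e subrr mulr0 subr0.
      have := down_eq HA e; have := down_eq HB e; lra.
    * have e := NA erefl; split=> // m _; rewrite e subrr mulr0 subr0.
      have := down_eq HA e; have := down_eq HB e; lra.
- move=> /par_flow [v1 [v2 [Fa [Fb ->]]]] Fc [Sa Sb Xba Xab].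
  have [UA DA] := IHa _ _ _ _ Fa (fun e => Fc (inl e)) Sa.
  have [UB DB] := IHb _ _ _ _ Fb (fun e => Fc (inr e)) Sb.
  split=> G u /par_flow [u1 [u2 [Ga [Gb ->]]]] Gc vu; rewrite !delay_par.
  + rewrite fw_par.
    case: (leP v1 u1) => h1; [case: (leP v2 u2) => h2|].
    * have [NA HA] := UA _ _ Ga (fun e => Gc (inl e)) h1.
      have [NB HB] := UB _ _ Gb (fun e => Gc (inr e)) h2.
      split; first by move/omin_None => [/NA -> /NB ->].
      move=> m /lbo_omin [ma mb]; have := HA m ma; have := HB m mb; lra.
    * have [NA HA] := UA _ _ Ga (fun e => Gc (inl e)) h1.
      have [NB HB] := DB _ _ Gb (fun e => Gc (inr e)) (ltW h2).
      case Ea: (fw (lft c) (lft d) (lft F)) Xba NA HA => [x|] Xba NA HA; last first.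
        by have := NA erefl; lra.
      case Eb: (bw (rgt d) (rgt F)) Xba NB HB => [y|] Xba NB HB; last first.
        by have := NB erefl; lra.
      split; first by case: (fw (rgt c) _ _).
      move=> m /lbo_omin [ma _]; have := HA x (lexx x); have := HB y (lexx y).
      have : 0 <= (x - m) * ((u1 + u2) - (v1 + v2)) by apply: mulr_ge0; rewrite subr_ge0.
      have : 0 <= (x - y) * (v2 - u2) by apply: mulr_ge0; rewrite subr_ge0 // ltW.
      lra.
    * have h2 : v2 <= u2 by lra.
      have [NA HA] := DA _ _ Ga (fun e => Gc (inl e)) (ltW h1).
      have [NB HB] := UB _ _ Gb (fun e => Gc (inr e)) h2.
      case Ea: (bw (lft d) (lft F)) Xab NA HA => [x|] Xab NA HA; last first.
        by have := NA erefl; lra.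
      case Eb: (fw (rgt c) (rgt d) (rgt F)) Xab NB HB => [y|] Xab NB HB; last first.
        by have := NB erefl; lra.
      split; first by case: (fw (lft c) _ _).
      move=> m /lbo_omin [_ mb]; have := HA x (lexx x); have := HB y (lexx y).
      have : 0 <= (y - m) * ((u1 + u2) - (v1 + v2)) by apply: mulr_ge0; rewrite subr_ge0.
      have : 0 <= (y - x) * (v1 - u1) by apply: mulr_ge0; rewrite subr_ge0 // ltW.
      lra.
  + rewrite bw_par.
    case: (leP u1 v1) => h1; [case: (leP u2 v2) => h2|].
    * have [NA HA] := DA _ _ Ga (fun e => Gc (inl e)) h1.
      have [NB HB] := DB _ _ Gb (fun e => Gc (inr e)) h2.
      split; first by move/omax_None => [/NA -> /NB ->].
      move=> m /ubo_omax [ma mb]; have := HA m ma; have := HB m mb; lra.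
    * have [NA HA] := DA _ _ Ga (fun e => Gc (inl e)) h1.
      have [NB HB] := UB _ _ Gb (fun e => Gc (inr e)) (ltW h2).
      case Ea: (bw (lft d) (lft F)) Xab NA HA => [x|] Xab NA HA; last first.
        by have := NA erefl; lra.
      case Eb: (fw (rgt c) (rgt d) (rgt F)) Xab NB HB => [y|] Xab NB HB; last first.
        by have := NB erefl; lra.
      split; first by case: (bw (rgt d) _).
      move=> m /ubo_omax [ma _]; have := HA x (lexx x); have := HB y (lexx y).
      have : 0 <= (m - x) * ((v1 + v2) - (u1 + u2)) by apply: mulr_ge0; rewrite subr_ge0.
      have : 0 <= (y - x) * (u2 - v2) by apply: mulr_ge0; rewrite subr_ge0 // ltW.
      lra.
    * have h2 : u2 <= v2 by lra.
      have [NA HA] := UA _ _ Ga (fun e => Gc (inl e)) (ltW h1).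
      have [NB HB] := DB _ _ Gb (fun e => Gc (inr e)) h2.
      case Ea: (fw (lft c) (lft d) (lft F)) Xba NA HA => [x|] Xba NA HA; last first.
        by have := NA erefl; lra.
      case Eb: (bw (rgt d) (rgt F)) Xba NB HB => [y|] Xba NB HB; last first.
        by have := NB erefl; lra.
      split; first by case: (bw (lft d) _).
      move=> m /ubo_omax [_ mb]; have := HA x (lexx x); have := HB y (lexx y).
      have : 0 <= (m - y) * ((v1 + v2) - (u1 + u2)) by apply: mulr_ge0; rewrite subr_ge0.
      have : 0 <= (x - y) * (u1 - v1) by apply: mulr_ge0; rewrite subr_ge0 // ltW.
      lra.
Qed.


Lemma delay_join_ser a b (d : sp_edge (SPSer a b) -> R) ga gb :
  delay d (sjoin ga gb) = delay (lft d) ga + delay (rgt d) gb.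
Proof. by rewrite /delay big_sumType. Qed.
Lemma delay_join_par a b (d : sp_edge (SPPar a b) -> R) ga gb :
  delay d (sjoin ga gb) = delay (lft d) ga + delay (rgt d) gb.
Proof. by rewrite /delay big_sumType. Qed.

Lemma bottleneck (T : finType) (p s : T -> R) :
  (forall e, p e = 0 \/ (p e = 1 /\ 0 < s e)) ->
  exists dl, 0 < dl /\ (forall e, p e = 1 -> dl <= s e) /\
    ((exists e, p e = 1) -> exists e, p e = 1 /\ dl = s e).
Proof.
move=> H; case: (pickP [pred e | p e == 1]) => [e0 /= he0|none].
  case: (arg_minP s (P := [pred e | p e == 1]) he0) => i /= /eqP pi hmin.
  exists (s i); split; first by case: (H i) => [|[]//]; rewrite pi => /eqP; rewrite oner_eq0.
  split; first by move=> e /eqP pe; exact: hmin.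
  by move=> _; exists i.
exists 1; split=> //; split.
  by move=> e pe; have := none e; rewrite /= pe eqxx.
by move=> [e pe]; have := none e; rewrite /= pe eqxx.
Qed.

Lemma cross a b (ca da Fa : sp_edge a -> R) (cb db Fb : sp_edge b -> R) v1 v2 :
  is_st_flow Fa v1 -> is_st_flow Fb v2 ->
  (forall e, Fa e <= ca e) -> (forall e, Fb e <= cb e) ->
  (forall Ga Gb u1 u2, is_st_flow Ga u1 -> is_st_flow Gb u2 ->
     (forall e, Ga e <= ca e) -> (forall e, Gb e <= cb e) -> u1 + u2 = v1 + v2 ->
     delay da Fa + delay db Fb <= delay da Ga + delay db Gb) ->
  leo (bw db Fb) (fw ca da Fa).
Proof.
move=> fa fb Fac Fbc H.
case Ea: (fw ca da Fa) => [x|]; case Eb: (bw db Fb) => [y|] //=.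
rewrite leNgt; apply/negP => lt.
have [pa_fl [pa_c pa_s]] := fw_spec Fac Ea.
set pa := cpath ca da Fa in pa_fl pa_c pa_s.
have [pb [pb_fl [pb_c pb_s]]] := bw_spec Eb.
have Sa : forall e, pa e = 0 \/ (pa e = 1 /\ 0 < ca e - Fa e).
  by move=> e; case: (pa_s e) => [->|[-> h]]; [left | right; rewrite subr_gt0].
have [da0 [da_pos [da_le _]]] := bottleneck Sa.
have [db0 [db_pos [db_le _]]] := bottleneck pb_s.
pose dl := Num.min da0 db0.
have dl_pos : 0 < dl by rewrite lt_min da_pos db_pos.
have dla : dl <= da0 by rewrite ge_min lexx.
have dlb : dl <= db0 by rewrite ge_min lexx orbT.
have [fa0 _] := fa; have [fb0 _] := fb.
have Ga0 e : 0 <= Fa e + dl * pa e.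
  by case: (pa_s e) => [->|[-> _]]; [rewrite mulr0 addr0 | have := fa0 e; lra].
have Gb0 e : 0 <= Fb e + (- dl) * pb e.
  case: (pb_s e) => [->|[pe _]]; first by rewrite mulr0 addr0.
  by have := db_le e pe; rewrite pe; lra.
have := H _ _ _ _ (flow_comb fa pa_fl Ga0) (flow_comb fb pb_fl Gb0).
rewrite !delay_comb pa_c pb_c.
have : 0 < dl * (y - x) by rewrite mulr_gt0 // subr_gt0.
move=> h1 h2.
have : delay da Fa + delay db Fb <= delay da Fa + dl * x + (delay db Fb + - dl * y).
  apply: h2; last by ring.
  - move=> e; case: (pa_s e) => [->|[pe _]]; first by rewrite mulr0 addr0.
    by have := da_le e pe; rewrite pe; lra.
  - move=> e; case: (pb_s e) => [->|[-> _]]; first by rewrite mulr0 addr0.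
    have := Fbc e; lra.
lra.
Qed.



Lemma nec N : forall (c d F : sp_edge N -> R) v, is_st_flow F v ->
  (forall e, F e <= c e) ->
  (forall G, is_st_flow G v -> (forall e, G e <= c e) -> delay d F <= delay d G) ->
  spopt c d F.
Proof.
elim: N => [|a IHa b IHb|a IHa b IHb] c d F v //.
- move=> /ser_flow [Fa Fb] Fc Hopt; split.
  + apply: (IHa _ _ _ v Fa (fun e => Fc (inl e))) => Ga Gf Gc.
    have : delay d F <= delay d (sjoin Ga (rgt F)).
      apply: Hopt; first by apply/ser_flow.
      by move=> [e|e]; [exact: Gc | exact: Fc].
    rewrite delay_ser delay_join_ser; lra.
  + apply: (IHb _ _ _ v Fb (fun e => Fc (inr e))) => Gb Gf Gc.
    have : delay d F <= delay d (sjoin (lft F) Gb).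
      apply: Hopt; first by apply/ser_flow.
      by move=> [e|e]; [exact: Fc | exact: Gc].
    rewrite delay_ser delay_join_ser; lra.
- move=> /par_flow [v1 [v2 [Fa [Fb ->]]]] Fc Hopt.
  have H Ga Gb u1 u2 : is_st_flow Ga u1 -> is_st_flow Gb u2 ->
     (forall e, Ga e <= lft c e) -> (forall e, Gb e <= rgt c e) -> u1 + u2 = v1 + v2 ->
     delay (lft d) (lft F) + delay (rgt d) (rgt F) <= delay (lft d) Ga + delay (rgt d) Gb.
    move=> ga gb gac gbc e.
    have : delay d F <= delay d (sjoin Ga Gb).
      apply: Hopt; first by apply/par_flow; exists u1, u2; split=> //; split.
      by move=> [x|x]; [exact: gac | exact: gbc].
    rewrite delay_par delay_join_par; lra.
  split.
  + apply: (IHa _ _ _ v1 Fa (fun e => Fc (inl e))) => Ga Gf Gc.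
    have := H _ _ _ _ Gf Fb Gc (fun e => Fc (inr e)) erefl; lra.
  + apply: (IHb _ _ _ v2 Fb (fun e => Fc (inr e))) => Gb Gf Gc.
    have := H _ _ _ _ Fa Gf (fun e => Fc (inl e)) Gc erefl; lra.
  + apply: (cross Fa Fb (fun e => Fc (inl e)) (fun e => Fc (inr e))) => Ga Gb u1 u2 ga gb gac gbc e; exact: H ga gb gac gbc e.
  + apply: (cross Fb Fa (fun e => Fc (inr e)) (fun e => Fc (inl e))).
    move=> Gb Ga u2 u1 gb ga gbc gac e.
    have := H _ _ _ _ ga gb gac gbc _; rewrite addrC e addrC; lra.
Qed.

Lemma ubo_osum (x y : R) o1 o2 : ubo x o1 -> ubo y o2 -> ubo (x + y) (osum o1 o2).
Proof. by case: o1 => [p|]; case: o2 => [q|] //= h1 h2; rewrite lerD. Qed.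
Lemma lbo_osum (x y : R) o1 o2 : lbo x o1 -> lbo y o2 -> lbo (x + y) (osum o1 o2).
Proof. by case: o1 => [p|]; case: o2 => [q|] //= h1 h2; rewrite lerD. Qed.

Lemma cpath_par a b (c d F : sp_edge (SPPar a b) -> R) :
  cpath c d F = if opick (fw (lft c) (lft d) (lft F)) (fw (rgt c) (rgt d) (rgt F))
      then sjoin (cpath (lft c) (lft d) (lft F)) (fun _ => 0)
      else sjoin (fun _ => 0) (cpath (rgt c) (rgt d) (rgt F)).
Proof. by []. Qed.

Lemma spopt_par_intro a b (c d F : sp_edge (SPPar a b) -> R) :
  spopt (lft c) (lft d) (lft F) -> spopt (rgt c) (rgt d) (rgt F) ->
  leo (bw (rgt d) (rgt F)) (fw (lft c) (lft d) (lft F)) ->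
  leo (bw (lft d) (lft F)) (fw (rgt c) (rgt d) (rgt F)) -> spopt c d F.
Proof. by move=> *; split. Qed.
Lemma leo_lbo (o o' : option R) x : leo o (Some x) -> lbo x o' -> leo o o'.
Proof. by case: o => [p|]; case: o' => [q|] //= h1 h2; apply: le_trans h2. Qed.
Lemma ubo_leo (o o' : option R) x : ubo x o -> lbo x o' -> leo o o'.
Proof. by case: o => [p|]; case: o' => [q|] //= h1 h2; apply: le_trans h2. Qed.
Lemma leo_ubo (o : option R) x : leo o (Some x) -> ubo x o.
Proof. by case: o. Qed.
Lemma ubo_omax_intro (o1 o2 : option R) x : ubo x o1 -> ubo x o2 -> ubo x (omax o1 o2).
Proof. by case: o1 => [p|]; case: o2 => [q|] //= h1 h2; rewrite ge_max h1 h2. Qed.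
Lemma lbo_omin_intro (o1 o2 : option R) x : lbo x o1 -> lbo x o2 -> lbo x (omin o1 o2).
Proof. by case: o1 => [p|]; case: o2 => [q|] //= h1 h2; rewrite le_min h1 h2. Qed.

Lemma aug N : forall (c d F : sp_edge N -> R) m t, spopt c d F -> fw c d F = Some m ->
  spopt c d (fun e => F e + t * cpath c d F e) /\
  ubo m (bw d (fun e => F e + t * cpath c d F e)) /\
  lbo m (fw c d (fun e => F e + t * cpath c d F e)).
Proof.
elim: N => [|a IHa b IHb|a IHa b IHb] c d F m t.
- move=> _; rewrite fw_edge; case: ifP => // _ [<-].
  split=> //; split; [rewrite bw_edge | rewrite fw_edge]; by case: ifP => _ /=; rewrite ?lexx.
- move=> [Sa Sb]; rewrite fw_ser.
  case Ea: (fw (lft c) (lft d) (lft F)) => [x|] //.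
  case Eb: (fw (rgt c) (rgt d) (rgt F)) => [y|] // [<-].
  have [S1 [B1 W1]] := IHa _ _ _ _ t Sa Ea.
  have [S2 [B2 W2]] := IHb _ _ _ _ t Sb Eb.
  split; first by split.
  by rewrite bw_ser fw_ser; split; [apply: ubo_osum | apply: lbo_osum].
- move=> [Sa Sb Xba Xab] Em; rewrite fw_par in Em.
  pose F' := fun e => F e + t * cpath c d F e.
  change (spopt c d F' /\ ubo m (bw d F') /\ lbo m (fw c d F')).
  have HA : opick (fw (lft c) (lft d) (lft F)) (fw (rgt c) (rgt d) (rgt F)) = true ->
      exists x, fw (lft c) (lft d) (lft F) = Some x /\ m = x /\ lbo x (fw (rgt c) (rgt d) (rgt F)).
    move: Em; case: (fw (lft c) _ _) => [x|]; case: (fw (rgt c) _ _) => [y|] //= Em Hp.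
      by exists x; split=> //; split=> //; move: Em; rewrite (min_l Hp) => -[].
    by exists x; split=> //; split=> //; case: Em.
  have HB : opick (fw (lft c) (lft d) (lft F)) (fw (rgt c) (rgt d) (rgt F)) = false ->
      exists y, fw (rgt c) (rgt d) (rgt F) = Some y /\ m = y /\ lbo y (fw (lft c) (lft d) (lft F)).
    move: Em; case: (fw (lft c) _ _) => [x|]; case: (fw (rgt c) _ _) => [y|] //= Em Hp.
      have Hyx : y <= x by rewrite leNgt; apply/negP => h; rewrite (ltW h) in Hp.
      by exists y; split=> //; split=> //; move: Em; rewrite (min_r Hyx) => -[].
    by exists y; split=> //; split=> //; case: Em.
  case Hp: (opick (fw (lft c) (lft d) (lft F)) (fw (rgt c) (rgt d) (rgt F))).
  + have [x [Ea [-> Lb]]] := HA Hp.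
    have E1 : lft F' = (fun e => lft F e + t * cpath (lft c) (lft d) (lft F) e).
      by apply: functional_extensionality => e; rewrite /F' /lft cpath_par Hp.
    have E2 : rgt F' = rgt F.
      by apply: functional_extensionality => e; rewrite /F' /rgt cpath_par Hp mulr0 addr0.
    have [S1 [B1 W1]] := IHa _ _ _ _ t Sa Ea.
    rewrite Ea in Xba.
    split; first apply: spopt_par_intro; rewrite ?bw_par ?fw_par ?E1 ?E2 //.
    * exact: leo_lbo Xba W1.
    * exact: ubo_leo B1 Lb.
    split; [exact: ubo_omax_intro B1 (leo_ubo Xba) | exact: lbo_omin_intro W1 Lb].
  + have [y [Eb [-> La]]] := HB Hp.
    have E1 : rgt F' = (fun e => rgt F e + t * cpath (rgt c) (rgt d) (rgt F) e).
      by apply: functional_extensionality => e; rewrite /F' /rgt cpath_par Hp.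
    have E2 : lft F' = lft F.
      by apply: functional_extensionality => e; rewrite /F' /lft cpath_par Hp mulr0 addr0.
    have [S1 [B1 W1]] := IHb _ _ _ _ t Sb Eb.
    rewrite Eb in Xab.
    split; first apply: spopt_par_intro; rewrite ?bw_par ?fw_par ?E1 ?E2 //.
    * exact: ubo_leo B1 La.
    * exact: leo_lbo Xab W1.
    split; [exact: ubo_omax_intro (leo_ubo Xab) B1 | exact: lbo_omin_intro La W1].
Qed.

End Opt.

Section Greedy.
Variable R : realFieldType.

Lemma opt_min N (c d F : sp_edge N -> R) v : is_st_flow F v -> (forall e, F e <= c e) ->
  spopt c d F -> forall G, is_st_flow G v -> (forall e, G e <= c e) -> delay d F <= delay d G.
Proof.
move=> Ff Fc S G Gf Gc; have [UP _] := opt Ff Fc S.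
have [_ H] := UP G v Gf Gc (lexx v).
have [m hm] := lbo_ex (fw c d F); have := H m hm; by rewrite subrr mulr0 addr0.
Qed.

Lemma step N (c d G : sp_edge N -> R) w (F : sp_edge N -> R) v w' :
  is_st_flow G w -> (forall e, G e <= c e) ->
  is_st_flow F v -> (forall e, F e <= c e) -> spopt c d F -> v < w' -> w' <= w ->
  (exists F', [/\ is_st_flow F' w', (forall e, F e <= F' e), (forall e, F' e <= c e) & spopt c d F'])
  \/ (exists F1 v1, [/\ is_st_flow F1 v1, v1 <= w',
        (forall e, F e <= F1 e /\ F1 e <= c e), spopt c d F1 &
        (#|[pred e | (F1 e < c e)%R]| < #|[pred e | (F e < c e)%R]|)%N]).
Proof.
move=> Gf Gc Ff Fc S vw ww.
have [UP _] := opt Ff Fc S.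
have [N0 _] := UP G w Gf Gc (ltW (lt_le_trans vw ww)).
case Ef: (fw c d F) N0 => [m|] N0; last by have := N0 erefl; lra.
have [pf [pc ps]] := fw_spec Fc Ef.
set p := cpath c d F in pf pc ps.
have Sa : forall e, p e = 0 \/ (p e = 1 /\ 0 < c e - F e).
  by move=> e; case: (ps e) => [->|[-> h]]; [left | right; rewrite subr_gt0].
have [dl [dl0 [dle dsat]]] := bottleneck Sa.
have [e1 pe1] : exists e, p e = 1.
  case: (pickP [pred e | p e == 1]) => [e /eqP pe|none]; first by exists e.
  have Hp0 : p = fun _ => 0.
    apply: functional_extensionality => e; case: (ps e) => [//|[pe _]].
    by have := none e; rewrite /= pe eqxx.
  have [_ [_ hv]] := pf; have [_ [_ hv0]] := @flow0 R N.
  by move: hv; rewrite Hp0 hv0 => /eqP; rewrite eq_sym oner_eq0.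
have [e0 [pe0 de0]] := dsat (ex_intro _ e1 pe1).
have [F0 _] := Ff.
have p01 e : 0 <= p e by case: (ps e) => [->|[-> _]]; rewrite ?ler01.
have comb t : 0 <= t -> is_st_flow (fun e => F e + t * p e) (v + t * 1).
  move=> t0; apply: flow_comb => // e; apply: addr_ge0; [exact: F0 | exact: mulr_ge0].
case: (leP (w' - v) dl) => hdl.
- left; exists (fun e => F e + (w' - v) * p e); split.
  + have h0 : 0 <= w' - v by rewrite subr_ge0 ltW.
    by have := comb _ h0; rewrite mulr1 [v + _]addrC subrK.
  + move=> e; have : 0 <= (w' - v) * p e by rewrite mulr_ge0 // subr_ge0 ltW.
    lra.
  + move=> e; case: (ps e) => [->|[pe _]]; first by rewrite mulr0 addr0.
    by have := dle e pe; rewrite pe; lra.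
  + exact: (aug (w' - v) S Ef).1.
right; exists (fun e => F e + dl * p e), (v + dl * 1); split.
- exact: comb (ltW dl0).
- rewrite mulr1; lra.
- move=> e; split; first by have := mulr_ge0 (ltW dl0) (p01 e); lra.
  case: (ps e) => [->|[pe _]]; first by rewrite mulr0 addr0.
  by have := dle e pe; rewrite pe; lra.
- exact: (aug dl S Ef).1.
- apply: proper_card; apply/properP; split.
    apply/subsetP => e; rewrite !inE /= => h.
    by have := mulr_ge0 (ltW dl0) (p01 e); lra.
  exists e0; rewrite !inE /=.
    by case: (ps e0) => [|[]//]; rewrite pe0 => /eqP; rewrite oner_eq0.
  by rewrite pe0 mulr1 de0 addrC subrK ltxx.
Qed.

Lemma greedy N (c d G : sp_edge N -> R) w :
  is_st_flow G w -> (forall e, G e <= c e) ->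
  forall k (F : sp_edge N -> R) v w', (#|[pred e | (F e < c e)%R]| <= k)%N ->
  is_st_flow F v -> (forall e, F e <= c e) -> spopt c d F -> v <= w' -> w' <= w ->
  exists F', [/\ is_st_flow F' w', (forall e, F e <= F' e), (forall e, F' e <= c e) & spopt c d F'].
Proof.
move=> Gf Gc; elim=> [|k IH] F v w' Hk Ff Fc S vw ww.
- case: (leP w' v) => h.
    have e : w' = v by apply/le_anti; rewrite h vw.
    by exists F; rewrite e; split=> // e'; rewrite lexx.
  case: (step Gf Gc Ff Fc S h ww) => // -[F1 [v1 [_ _ _ _ hc]]].
  by move: Hk; rewrite leqn0 => /eqP hk; rewrite hk in hc.
- case: (leP w' v) => h.
    have e : w' = v by apply/le_anti; rewrite h vw.
    by exists F; rewrite e; split=> // e'; rewrite lexx.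
  case: (step Gf Gc Ff Fc S h ww) => // -[F1 [v1 [F1f v1w FF1 S1 hc]]].
  have hk : (#|[pred e | (F1 e < c e)%R]| <= k)%N.
    by rewrite -ltnS; apply: leq_trans hc Hk.
  have [F' [F'f FF' F'c S']] := IH F1 v1 w' hk F1f (fun e => (FF1 e).2) S1 v1w ww.
  exists F'; split=> // e; exact: le_trans (FF1 e).1 (FF' e).
Qed.

End Greedy.

Lemma flow_sum (R : realFieldType) N (A : finType) (T : {set A}) (h : A -> sp_edge N -> R) (r : A -> R) :
  (forall j, j \in T -> is_st_flow (h j) (r j)) ->
  is_st_flow (fun e => \sum_(j in T) h j e) (\sum_(j in T) r j).
Proof.
move=> H; split; first by move=> e; apply: sumr_ge0 => j jT; case: (H j jT) => + _; apply.
split.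
  move=> x xs xt; rewrite netout_sum; apply: big1 => j jT.
  by case: (H j jT) => _ [+ _]; apply.
by rewrite netout_sum; apply: eq_bigr => j jT; case: (H j jT) => _ [_ ->].
Qed.

Lemma flow_scale (R : realFieldType) N (G : sp_edge N -> R) v t :
  is_st_flow G v -> 0 <= t -> is_st_flow (fun e => t * G e) (t * v).
Proof.
move=> [G0 [Gc Gv]] t0; have H x : net_out (fun e => t * G e) x = t * net_out G x.
  by rewrite /net_out -!mulr_sumr mulrBr.
split; first by move=> e; apply: mulr_ge0.
split; last by rewrite H Gv.
by move=> x xs xt; rewrite H Gc ?mulr0.
Qed.

Theorem lemmaD3 (R : realFieldType) (N : sp) (A : finType)
    (c d : sp_edge N -> R) (r : A -> R)
    (hc : forall e, 0 < c e) (hd : forall e, 0 <= d e)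
    (hr : forall i, 0 <= r i)
    (hmax : exists (v : R) (g : sp_edge N -> R),
        is_st_flow g v /\ (forall e, g e <= c e) /\ \sum_i r i <= v) :
  extensibility c d r.
Proof.
move=> S f i [[Hfl Hsr] Hopt] iS.
have [vmax [G0 [G0f [G0c G0r]]]] := hmax.
pose F := fun e => \sum_(j in S) f j e.
pose v := \sum_(j in S) r j.
have Ff : is_st_flow F v by apply: flow_sum.
have Fc : forall e, F e <= c e := Hsr.
have Fopt : forall G, is_st_flow G v -> (forall e, G e <= c e) -> delay d F <= delay d G.
  move=> G Gf Gc; rewrite /F delay_sum.
  have [G0' _] := Gf.
  case: (eqVneq v 0) => [v0|vn0].
  - have rj0 : forall j, j \in S -> r j = 0.
      by move=> j jS; apply: (psumr_eq0P _ v0) => // k _; apply: hr.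
    case: (set_0Vmem S) => [S0|[j0 j0S]].
      rewrite S0 big_set0 /delay; apply: sumr_ge0 => e _; exact: mulr_ge0.
    pose g := fun j => if j == j0 then G else (fun _ => 0).
    have gsum e : \sum_(j in S) g j e = G e.
      rewrite (bigD1 j0) //= /g eqxx big1 ?addr0 // => j /andP [_ /negbTE ->] //.
    have gd : \sum_(j in S) delay d (g j) = delay d G.
      rewrite (bigD1 j0) //= /g eqxx big1 ?addr0 // => j /andP [_ /negbTE ->].
      exact: delay0.
    rewrite -gd; apply: Hopt; split.
      move=> j jS; rewrite /g (rj0 j jS); case: eqP => _; [by rewrite -v0 | exact: flow0].
    by move=> e; rewrite gsum.
  - pose g := fun j e => r j / v * G e.
    have gsum e : \sum_(j in S) g j e = G e.
      by rewrite /g -mulr_suml -mulr_suml -/v divff // mul1r.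
    have gd : \sum_(j in S) delay d (g j) = delay d G.
      rewrite -delay_sum; congr delay; apply: functional_extensionality => e; exact: gsum.
    rewrite -gd; apply: Hopt; split.
      move=> j jS; have := flow_scale Gf (t := r j / v) _.
      rewrite divfK //; apply; apply: divr_ge0 => //; exact: sumr_ge0.
    by move=> e; rewrite gsum.
have S0 := nec Ff Fc Fopt.
have ww : v + r i <= vmax.
  apply: le_trans G0r; rewrite (bigID (fun j => j \in i |: S)) /= big_setU1 //= -/v.
  have : 0 <= \sum_(j | j \notin i |: S) r j by apply: sumr_ge0.
  lra.
have vw : v <= v + r i by rewrite lerDl.
have [F' [F'f FF' F'c S']] := greedy G0f G0c (leqnn _) Ff Fc S0 vw ww.
pose g := fun j => if j == i then (fun e => F' e + (-1) * F e) else f j.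
have gS j : j \in S -> g j = f j.
  by move=> jS; rewrite /g; case: eqP => // ji; rewrite -ji jS in iS.
have gsum e : \sum_(j in i |: S) g j e = F' e.
  rewrite big_setU1 //= {1}/g eqxx (eq_bigr (fun j => f j e)); last by move=> j /gS ->.
  rewrite -/(F e); ring.
exists g; split; last by move=> j /gS ->.
split.
  split.
    move=> j; rewrite in_setU1 => /orP [/eqP ->|jS]; last by rewrite gS //; apply: Hfl.
    rewrite /g eqxx.
    have nn : forall e, 0 <= F' e + -1 * F e by move=> e; have := FF' e; lra.
    have -> : r i = (v + r i) + -1 * v by ring.
    exact: flow_comb F'f Ff nn.
  by move=> e; rewrite gsum.
move=> h [hfl hsr].
rewrite -!delay_sum.
have -> : (fun e => \sum_(j in i |: S) g j e) = F' by apply: functional_extensionality.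
apply: (opt_min F'f F'c S'); last exact: hsr.
have := flow_sum hfl; rewrite big_setU1 //= -/v addrC //.
Qed.
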